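(* Let $\mathcal T\in\Sigma^n$ be a text. The permutations $\pi,\bar\pi$ defined as $\pi(i)=\mathrm{ISA}[i]$ and $\bar\pi(i)=n-\mathrm{ISA}[i]+1$ for $i\in[n]$ are order-preserving for $\mathcal T$. Furthermore, $|\mathtt{st\text{-}lex}^-|\le r$ and $|\mathtt{st\text{-}lex}^+|\le r$.
   Context: A text is a string $\mathcal T\in\Sigma^n$ over an integer alphabet whose last symbol $\mathcal T[n]=\$$ occurs only there and is smallest. $\mathrm{ISA}[i]$ is the rank of the suffix $\mathcal T[i,n]$ among all suffixes of $\mathcal T$ in lexicographic order. A permutation $\pi:[n]\to[n]$ is order-preserving for $\mathcal T$ if for all $i,j\in[n-1]$, $\pi(i)<\pi(j)$ and $\mathcal T[i,i+1]=\mathcal T[j,j+1]$ imply $\pi(i+1)<\pi(j+1)$. For $i\ne j$, $\mathrm{rlce}(i,j)$ is the length of the longest common prefix of $\mathcal T[i,n]$ and $\mathcal T[j,n]$; $\mathrm{LPF}_\pi[i]=0$ if $\pi(i)=1$, else $\mathrm{LPF}_\pi[i]=\max_{\pi(j)<\pi(i)}\mathrm{rlce}(j,i)$; $\mathrm{PDA}_\pi$ is the set $\{i+\mathrm{LPF}_\pi[i]:i\in[n]\}$ sorted colexicographically by the prefixes $\mathcal T[1,j]$. $\mathtt{st\text{-}lex}^-=\mathrm{PDA}_\pi$ and $\mathtt{st\text{-}lex}^+=\mathrm{PDA}_{\bar\pi}$. $r$ is the number of maximal equal-letter runs in $\mathrm{BWT}(\mathcal T)$, obtained by sorting all rotations of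 $\mathcal T$ lexicographically and concatenating their last characters. *)

(* Defs.v *)
From mathcomp Require Import all_boot.
Set Implicit Arguments. Unset Strict Implicit. Unset Printing Implicit Defensive.

(* Texts are sequences over an integer alphabet, here [nat].
   Positions are 1-indexed as in the paper: T[i] = nth 0 T (i-1),
   T[i,n] = drop (i-1) T, T[1,j] = take j T. *)

(* A text: nonempty, and its last symbol $ is strictly smaller than every
   other symbol (hence occurs only at the end and is smallest). *)
Definition is_text (T : seq nat) : Prop :=
  0 < size T /\ forall i, i < (size T).-1 -> last 0 T < nth 0 T i.

Definition tchar (T : seq nat) (i : nat) : nat := nth 0 T i.-1.
Definition suf (T : seq nat) (i : nat) : seq nat := drop i.-1 T.

Fixpoint lexlt (s t : seq nat) : bool :=
  match s, t with
  | _, [::] => false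
  | [::], _ :: _ => true
  | x :: s', y :: t' => (x < y) || ((x == y) && lexlt s' t')
  end.
Definition lexle (s t : seq nat) : bool := (s == t) || lexlt s t.

Definition ISA (T : seq nat) (i : nat) : nat :=
  (count (fun j => lexlt (suf T j) (suf T i)) (iota 1 (size T))).+1.

Definition is_perm_on (n : nat) (pi : nat -> nat) : Prop :=
  perm_eq (map pi (iota 1 n)) (iota 1 n).

Definition order_preserving (T : seq nat) (pi : nat -> nat) : Prop :=
  forall i j, 1 <= i <= (size T).-1 -> 1 <= j <= (size T).-1 ->
    pi i < pi j -> tchar T i = tchar T j -> tchar T i.+1 = tchar T j.+1 ->
    pi i.+1 < pi j.+1.

Fixpoint lcp (s t : seq nat) : nat :=
  match s, t with
  | x :: s', y :: t' => if x == y then (lcp s' t').+1 else 0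
  | _, _ => 0
  end.

Definition rlce (T : seq nat) (i j : nat) : nat := lcp (suf T i) (suf T j).

Definition LPF (T : seq nat) (pi : nat -> nat) (i : nat) : nat :=
  if pi i == 1 then 0
  else \max_(1 <= j < (size T).+1 | pi j < pi i) rlce T j i.

Definition colex_le (T : seq nat) (a b : nat) : bool :=
  lexle (rev (take a T)) (rev (take b T)).

Definition PDA (T : seq nat) (pi : nat -> nat) : seq nat :=
  sort (colex_le T) (undup [seq i + LPF T pi i | i <- iota 1 (size T)]).

Definition pi_minus (T : seq nat) (i : nat) : nat := ISA T i.
Definition pi_plus (T : seq nat) (i : nat) : nat := size T - ISA T i + 1.

Definition st_lex_minus (T : seq nat) : seq nat := PDA T (pi_minus T).
Definition st_lex_plus (T : seq nat) : seq nat := PDA T (pi_plus T).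

Definition BWT (T : seq nat) : seq nat :=
  [seq last 0 r | r <- sort lexle [seq rot k T | k <- iota 0 (size T)]].

Definition runs (s : seq nat) : nat :=
  match s with
  | [::] => 0
  | x :: s' => (count id (pairmap (fun a b => a != b) x s')).+1
  end.

Definition bwt_r (T : seq nat) : nat := runs (BWT T).

(* Main.v *)
Require Import Defs.
From mathcomp Require Import all_boot zify.
Set Implicit Arguments. Unset Strict Implicit. Unset Printing Implicit Defensive.

Lemma lexlt_irr s : lexlt s s = false.
Proof. by elim: s => //= x s ->; rewrite ltnn eqxx. Qed.

Lemma lexlt_cons x s t : lexlt (x :: s) (x :: t) = lexlt s t.
Proof. by rewrite /= ltnn eqxx. Qed.

Lemma lexlt_trans s t u : lexlt s t -> lexlt t u -> lexlt s u.
Proof.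
elim: s t u => [|x s IH] [|y t] [|z u] //=.
case/orP=> [xy|/andP[/eqP-> st]]; case/orP=> [yz|/andP[/eqP<- tu]].
- by rewrite (ltn_trans xy yz).
- by rewrite xy.
- by rewrite yz.
- by rewrite eqxx (IH _ _ st tu) orbT.
Qed.

Lemma lexlt_asym s t : lexlt s t -> lexlt t s = false.
Proof. by move=> st; apply/negbTE/negP=> ts; have := lexlt_trans st ts; rewrite lexlt_irr. Qed.

Lemma lexlt_total s t : s != t -> lexlt s t || lexlt t s.
Proof.
elim: s t => [|x s IH] [|y t] //=.
case: (ltngtP x y) => //= ->; rewrite ?eqxx /= => st.
by apply: IH; apply: contra st => /eqP->.
Qed.

Lemma lcpC s t : lcp s t = lcp t s.
Proof. elim: s t => [|x s IH] [|y t] //=; by case: (eqVneq x y) => [_|xy]; rewrite ?IH. Qed.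

Lemma lcp_le3a s t u : lexlt s t -> lexlt t u -> lcp s u <= lcp t u.
Proof.
elim: s t u => [|x s IH] [|y t] [|z u] //=.
case: (eqVneq x z) => [<-|] //.
case/orP=> [xy|/andP[/eqP<- st]]; case/orP=> [yx|/andP[/eqP yx tu]].
- by have := ltn_trans xy yx; rewrite ltnn.
- by move: xy; rewrite yx ltnn.
- by move: yx; rewrite ltnn.
- by rewrite eqxx ltnS IH.
Qed.

Lemma lcp_le3b s t u : lexlt s t -> lexlt t u -> lcp s u <= lcp s t.
Proof.
elim: s t u => [|x s IH] [|y t] [|z u] //=.
case: (eqVneq x z) => [<-|] //.
case/orP=> [xy|/andP[/eqP<- st]]; case/orP=> [yx|/andP[/eqP yx tu]].
- by have := ltn_trans xy yx; rewrite ltnn.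
- by move: xy; rewrite yx ltnn.
- by move: yx; rewrite ltnn.
- by rewrite eqxx ltnS IH.
Qed.

Lemma lcp_size s t : lcp s t <= size s.
Proof. by elim: s t => [|x s IH] [|y t] //=; case: eqP => // _; rewrite ltnS. Qed.

Lemma lcp_nth s t p : p < lcp s t -> nth 0 s p = nth 0 t p.
Proof.
elim: s t p => [|x s IH] [|y t] [|p] //=; case: eqP => // _.
by rewrite ltnS; apply: IH.
Qed.

Lemma lexlt_cat s t x y : lcp s t < size s -> lcp s t < size t ->
  lexlt (s ++ x) (t ++ y) = lexlt s t.
Proof.
elim: s t => [|a s IH] [|b t] //=.
case: eqP => [->|ab] //=; rewrite !ltnS => h1 h2; first by rewrite ltnn /= IH.
Qed.

Lemma count_sub_in (T : eqType) (a1 a2 : pred T) (s : seq T) :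
  {in s, forall x, a1 x -> a2 x} -> count a1 s <= count a2 s.
Proof.
elim: s => [|x s IH] //= sub.
have := IH (fun y ys => sub y (mem_behead (s:=x::s) ys)); have := sub x (mem_head _ _).
by case: (a1 x); case: (a2 x) => // h; rewrite ?add0n ?add1n //; lia.
Qed.

Lemma count_lt_strict (T : eqType) (a1 a2 : pred T) (s : seq T) x0 :
  {in s, forall x, a1 x -> a2 x} -> x0 \in s -> a2 x0 -> ~~ a1 x0 ->
  count a1 s < count a2 s.
Proof.
elim: s => [|x s IH] //= sub; rewrite inE => /orP[/eqP<-|xs] h2 h1.
- rewrite h2 (negbTE h1) add0n add1n ltnS; apply: count_sub_in => y ys.
  by apply: sub; rewrite inE ys orbT.
- have := IH (fun y ys => sub y (mem_behead (s:=x::s) ys)) xs h2 h1.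
  have := sub x (mem_head _ _).
  by case: (a1 x); case: (a2 x) => // h; [|rewrite add0n]; lia.
Qed.

Lemma uniq_map_inj (T1 T2 : eqType) (f : T1 -> T2) s :
  uniq (map f s) -> {in s &, injective f}.
Proof.
elim: s => [|x s IH] //= /andP[nx us] a b; rewrite !inE.
case/orP=> [/eqP->|ina]; case/orP=> [/eqP->|bs] //.
- by move=> e; move: nx; rewrite e (map_f f bs).
- by move=> e; move: nx; rewrite -e (map_f f ina).
- by apply: IH.
Qed.

Lemma suf_cons T i : 1 <= i <= size T -> suf T i = tchar T i :: suf T i.+1.
Proof. move=> /andP[i1 iT]; rewrite /suf /tchar (drop_nth 0); first by case: i i1 {iT}.
lia. Qed.

Lemma size_suf T i : size (suf T i) = size T - i.-1.
Proof. by rewrite /suf size_drop. Qed.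

Lemma nth_suf T i p : nth 0 (suf T i) p = nth 0 T (i.-1 + p).
Proof. by rewrite /suf nth_drop. Qed.

Lemma text_dollar T i : is_text T -> 1 <= i < size T -> tchar T (size T) < tchar T i.
Proof.
move=> [T0 HT] /andP[i1 iT]; rewrite /tchar nth_last; apply: HT; lia.
Qed.

Lemma tchar_eq_n T i j : is_text T -> 1 <= i <= size T -> 1 <= j <= size T ->
  tchar T i = tchar T j -> j = size T -> i = size T.
Proof.
move=> HT hi hj e ej; case: (ltngtP i (size T)) => //; last by lia.
move=> iT; have := text_dollar HT (i:=i); rewrite -ej -e ltnn; lia.
Qed.

Lemma suf_lcp_lt T i j : is_text T -> 1 <= i <= size T -> 1 <= j <= size T -> i != j ->
  lcp (suf T i) (suf T j) < size (suf T i).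
Proof.
move=> HT hi hj ij; rewrite ltnNge; apply/negP => h.
have hs := lcp_size (suf T j) (suf T i); rewrite lcpC in hs.
have := leq_trans h hs; rewrite !size_suf => hji.
have lt : j < i by lia.
have := lcp_nth (p := size T - i) (s := suf T i) (t := suf T j).
rewrite !nth_suf size_suf in h *.
have -> : i.-1 + (size T - i) = (size T).-1 by lia.
move=> /(_ ltac:(lia)) e.
have := text_dollar HT (i := j + (size T - i)).
rewrite /tchar e; have -> : (j + (size T - i)).-1 = j.-1 + (size T - i) by lia.
rewrite ltnn; lia.
Qed.

Lemma suf_lcp_lt2 T i j : is_text T -> 1 <= i <= size T -> 1 <= j <= size T -> i != j ->
  lcp (suf T i) (suf T j) < size (suf T j).
Proof. by move=> HT hi hj ij; rewrite lcpC; apply: suf_lcp_lt; rewrite // eq_sym. Qed.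

Lemma suf_neq T i j : 1 <= i <= size T -> 1 <= j <= size T -> i != j -> suf T i != suf T j.
Proof.
move=> hi hj ij; apply/negP=> /eqP e; have := congr1 size e; rewrite !size_suf; lia.
Qed.

Lemma rlce_step T i j : 1 <= i <= size T -> 1 <= j <= size T ->
  rlce T j i = if tchar T j == tchar T i then (rlce T j.+1 i.+1).+1 else 0.
Proof. by move=> hi hj; rewrite /rlce (suf_cons hi) (suf_cons hj). Qed.

Lemma ISA_lt_of T i k : 1 <= i <= size T -> 1 <= k <= size T ->
  lexlt (suf T i) (suf T k) -> ISA T i < ISA T k.
Proof.
move=> hi hk ik; rewrite /ISA ltnS.
apply: (count_lt_strict (x0 := i)).
- by move=> x _ h; apply: lexlt_trans h ik.
- rewrite mem_iota; lia.
- exact: ik.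
- by rewrite /= lexlt_irr.
Qed.

Lemma ISA_lt T i k : 1 <= i <= size T -> 1 <= k <= size T ->
  (ISA T i < ISA T k) = lexlt (suf T i) (suf T k).
Proof.
move=> hi hk; apply/idP/idP; last exact: ISA_lt_of.
case: (eqVneq i k) => [->|ik]; first by rewrite ltnn.
case/orP: (lexlt_total (suf_neq hi hk ik)) => // h.
by move/(ISA_lt_of hk hi): h => h1 h2; have := ltn_trans h1 h2; rewrite ltnn.
Qed.

Lemma ISA_inj T i k : 1 <= i <= size T -> 1 <= k <= size T -> ISA T i = ISA T k -> i = k.
Proof.
move=> hi hk e; apply/eqP; apply/negPn/negP => ik.
case/orP: (lexlt_total (suf_neq hi hk ik)) => /ISA_lt_of h.
- by have := h hi hk; rewrite e ltnn.
- by have := h hk hi; rewrite e ltnn.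
Qed.

Lemma ISA_range T i : 1 <= i <= size T -> 1 <= ISA T i <= size T.
Proof.
move=> hi; rewrite /ISA ltnS /=.
have : count (fun j => lexlt (suf T j) (suf T i)) (iota 1 (size T)) <
       count predT (iota 1 (size T)).
  apply: (count_lt_strict (x0 := i)) => //; first by rewrite mem_iota; lia.
  by rewrite /= lexlt_irr.
by rewrite count_predT size_iota.
Qed.

Lemma perm_of_inj n (pi : nat -> nat) :
  (forall i, 1 <= i <= n -> 1 <= pi i <= n) ->
  (forall i k, 1 <= i <= n -> 1 <= k <= n -> pi i = pi k -> i = k) ->
  is_perm_on n pi.
Proof.
move=> hr hi; rewrite /is_perm_on.
have u : uniq (map pi (iota 1 n)).
  rewrite map_inj_in_uniq ?iota_uniq // => a b; rewrite !mem_iota => ha hb.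
  apply: hi; lia.
have sub : {subset map pi (iota 1 n) <= iota 1 n}.
  move=> x /mapP[i]; rewrite !mem_iota => h ->; have := hr i; lia.
have sz : size (iota 1 n) <= size (map pi (iota 1 n)) by rewrite size_map.
have [_ e] := uniq_min_size u sub sz.
by apply: uniq_perm => //; apply: iota_uniq.
Qed.

Lemma perm_range n pi i : is_perm_on n pi -> 1 <= i <= n -> 1 <= pi i <= n.
Proof.
move=> hp hi; have : pi i \in iota 1 n.
  by rewrite -(perm_mem hp); apply: map_f; rewrite mem_iota; lia.
rewrite mem_iota; lia.
Qed.

Lemma perm_inj n pi i k : is_perm_on n pi -> 1 <= i <= n -> 1 <= k <= n -> pi i = pi k -> i = k.
Proof.
move=> hp hi hk; have u : uniq (map pi (iota 1 n)) by rewrite (perm_uniq hp) iota_uniq.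
by apply: (uniq_map_inj u); rewrite mem_iota; lia.
Qed.

Lemma perm_surj n pi k : is_perm_on n pi -> 1 <= k <= n -> exists2 i, 1 <= i <= n & pi i = k.
Proof.
move=> hp hk; have : k \in map pi (iota 1 n) by rewrite (perm_mem hp) mem_iota; lia.
case/mapP=> i; rewrite mem_iota => hi ->; exists i => //; lia.
Qed.

Lemma perm_minus T : is_perm_on (size T) (pi_minus T).
Proof. apply: perm_of_inj; [exact: ISA_range | exact: ISA_inj]. Qed.

Lemma perm_plus T : is_perm_on (size T) (pi_plus T).
Proof.
apply: perm_of_inj => [i hi|i k hi hk]; rewrite /pi_plus.
- have := ISA_range hi; lia.
- move=> e; apply: (ISA_inj hi hk); have := ISA_range hi; have := ISA_range hk; lia.
Qed.

Lemma op_minus T i j : 1 <= i <= (size T).-1 -> 1 <= j <= (size T).-1 ->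
  tchar T i = tchar T j -> ISA T i < ISA T j -> ISA T i.+1 < ISA T j.+1.
Proof.
move=> hi hj e; have hi' : 1 <= i <= size T by lia. have hj' : 1 <= j <= size T by lia.
rewrite !ISA_lt //; try lia.
by rewrite (suf_cons hi') (suf_cons hj') e lexlt_cons.
Qed.

Lemma op_plus T i j : 1 <= i <= (size T).-1 -> 1 <= j <= (size T).-1 ->
  tchar T i = tchar T j -> pi_plus T i < pi_plus T j -> pi_plus T i.+1 < pi_plus T j.+1.
Proof.
move=> hi hj e; rewrite /pi_plus.
have r1 := ISA_range (T:=T) (i:=i) ltac:(lia). have r2 := ISA_range (T:=T) (i:=j) ltac:(lia).
have r3 := ISA_range (T:=T) (i:=i.+1) ltac:(lia). have r4 := ISA_range (T:=T) (i:=j.+1) ltac:(lia).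
move=> h; have h' : ISA T j < ISA T i by lia.
have := op_minus hj hi (esym e) h'; lia.
Qed.

Lemma H3_minus T a b c : 1 <= a <= size T -> 1 <= b <= size T -> 1 <= c <= size T ->
  pi_minus T a < pi_minus T b -> pi_minus T b < pi_minus T c -> rlce T a c <= rlce T b c.
Proof.
rewrite /pi_minus => ha hb hc; rewrite !ISA_lt // => h1 h2; exact: lcp_le3a h1 h2.
Qed.

Lemma H3_plus T a b c : 1 <= a <= size T -> 1 <= b <= size T -> 1 <= c <= size T ->
  pi_plus T a < pi_plus T b -> pi_plus T b < pi_plus T c -> rlce T a c <= rlce T b c.
Proof.
rewrite /pi_plus => ha hb hc.
have r1 := ISA_range ha. have r2 := ISA_range hb. have r3 := ISA_range hc.
move=> h1 h2; have h1' : ISA T b < ISA T a by lia.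
have h2' : ISA T c < ISA T b by lia.
rewrite ISA_lt // in h1'; rewrite ISA_lt // in h2'.
by rewrite /rlce lcpC (lcpC (suf T b)); apply: lcp_le3b h2' h1'.
Qed.

Definition prevc (T : seq nat) (i : nat) := if i == 1 then tchar T (size T) else tchar T i.-1.

Lemma LPF_ge T pi i j : is_perm_on (size T) pi -> 1 <= i <= size T -> 1 <= j <= size T ->
  pi j < pi i -> rlce T j i <= LPF T pi i.
Proof.
move=> hp hi hj lt; have := perm_range hp hj => rj.
rewrite /LPF ifN; last by apply/eqP; lia.
by apply: (leq_bigmax_seq j) => //; rewrite mem_index_iota; lia.
Qed.

Lemma LPF_le T pi i m : 1 <= i <= size T ->
  (forall j, 1 <= j <= size T -> pi j < pi i -> rlce T j i <= m) -> LPF T pi i <= m.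
Proof.
move=> hi h; rewrite /LPF; case: eqP => // _.
apply/bigmax_leqP_seq => j; rewrite mem_index_iota => hj; apply: h; lia.
Qed.

Lemma claimA T pi k : is_text T -> is_perm_on (size T) pi ->
  (forall i j, 1 <= i <= (size T).-1 -> 1 <= j <= (size T).-1 -> tchar T i = tchar T j ->
     pi i < pi j -> pi i.+1 < pi j.+1) ->
  1 <= k -> k < size T -> LPF T pi k <= (LPF T pi k.+1).+1.
Proof.
move=> HT hp H2 k1 kn; apply: LPF_le; first lia.
move=> j hj lt; have jk : j != k by apply/eqP=> e; move: lt; rewrite e ltnn.
rewrite rlce_step //; last lia.
case: eqP => // e.
have jn : j != size T.
  apply/eqP => ejn; have := tchar_eq_n HT (i:=k) (j:=j) ltac:(lia) hj (esym e) ejn; lia.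
have lt2 := H2 j k ltac:(lia) ltac:(lia) e lt.
rewrite ltnS; apply: LPF_ge => //; lia.
Qed.

Lemma claimB T pi k j : is_text T -> is_perm_on (size T) pi ->
  (forall i j, 1 <= i <= (size T).-1 -> 1 <= j <= (size T).-1 -> tchar T i = tchar T j ->
     pi i < pi j -> pi i.+1 < pi j.+1) ->
  (forall a b c, 1 <= a <= size T -> 1 <= b <= size T -> 1 <= c <= size T ->
     pi a < pi b -> pi b < pi c -> rlce T a c <= rlce T b c) ->
  1 <= k -> k < size T -> 1 <= j <= size T -> pi j = (pi k.+1).-1 -> pi k.+1 != 1 ->
  prevc T k.+1 = prevc T j -> (LPF T pi k.+1).+1 <= LPF T pi k.
Proof.
move=> HT hp H2 H3 k1 kn hj ej n1 pe.
have rk1 := perm_range hp (i:=k.+1) ltac:(lia).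
have rk := perm_range hp (i:=k) ltac:(lia).
move: pe; rewrite /prevc (_ : (k.+1 == 1) = false); last by apply/eqP; lia.
rewrite /=; case: eqP => [j1|jn1] pe.
  have := tchar_eq_n HT (i:=k) (j:=size T) ltac:(lia) ltac:(lia) pe erefl; lia.
case: j hj ej jn1 pe => [|j'] //= hj ej jn1 pe.
have hj' : 1 <= j' <= (size T).-1 by lia.
have jk : j' != k.
  by apply/eqP=> e; move: ej; rewrite e; lia.
have ltjk : pi j' < pi k.
  have rj := perm_range hp (i:=j') ltac:(lia).
  case: (ltngtP (pi j') (pi k)) => // h.
  - have := H2 k j' ltac:(lia) hj' pe h; lia.
  - by have := perm_inj hp (i:=j') (k:=k) ltac:(lia) ltac:(lia) h; move/eqP: jk.
have := LPF_ge hp (i:=k) (j:=j') ltac:(lia) ltac:(lia) ltjk.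
rewrite rlce_step; try lia. rewrite pe eqxx => h1.
apply: leq_trans h1; rewrite ltnS.
apply: LPF_le; first lia.
move=> l hl ltl.
case: (eqVneq (pi l) (pi j'.+1)) => [e|ne].
  by rewrite (perm_inj hp (i:=l) (k:=j'.+1) hl hj e).
apply: H3 => //; first lia.
have := perm_range hp hl; lia.
Qed.

Lemma runs_cons2 x y s : runs [:: x, y & s] = (x != y) + runs (y :: s).
Proof. by rewrite /runs /= addnS. Qed.

Lemma runs_iota (B : nat -> nat) m a :
  runs (map B (iota a m.+1)) = (count (fun k => B k != B k.-1) (iota a.+1 m)).+1.
Proof.
elim: m a => [|m IH] a; first by [].
have -> : map B (iota a m.+2) = [:: B a, B a.+1 & map B (iota a.+2 m)] by [].
rewrite runs_cons2.
have -> : B a.+1 :: map B (iota a.+2 m) = map B (iota a.+1 m.+1) by [].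
rewrite IH -addnS; congr (_ + _); first by rewrite /= eq_sym.
Qed.

Lemma runs_count (B : nat -> nat) n : 0 < n ->
  runs (map B (iota 1 n)) = count (fun k => (k == 1) || (B k != B k.-1)) (iota 1 n).
Proof.
case: n => [|m] // _; rewrite runs_iota /= add1n; congr _.+1.
apply: eq_in_count => k; rewrite mem_iota => hk /=.
by rewrite (_ : (k == 1) = false) //; apply/eqP; lia.
Qed.

Lemma runs_rcons x s y : runs (rcons (x :: s) y) = runs (x :: s) + (last x s != y).
Proof. by rewrite /runs /= -cats1 pairmap_cat count_cat /= addn0 addSn. Qed.

Lemma last_rev_head (x0 : nat) s : last x0 (rev s) = head x0 s.
Proof. by case: s => [|y s] //=; rewrite rev_cons last_rcons. Qed.

Lemma runs_rev s : runs (rev s) = runs s.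
Proof.
elim: s => [|x s IH] //; case: s IH => [|y s] IH //.
rewrite rev_cons; case E: (rev (y :: s)) => [|z t]; first by move/(congr1 size): E; rewrite size_rev.
rewrite runs_rcons -E IH runs_cons2 addnC eq_sym; congr (_ + _).
have := last_rev_head 0 (y :: s); rewrite E /= => ->. by [].
Qed.

Lemma PDA_bound T pi (B : nat -> nat) : is_text T -> is_perm_on (size T) pi ->
  (forall i j, 1 <= i <= (size T).-1 -> 1 <= j <= (size T).-1 -> tchar T i = tchar T j ->
     pi i < pi j -> pi i.+1 < pi j.+1) ->
  (forall a b c, 1 <= a <= size T -> 1 <= b <= size T -> 1 <= c <= size T ->
     pi a < pi b -> pi b < pi c -> rlce T a c <= rlce T b c) ->
  (forall i, 1 <= i <= size T -> B (pi i) = prevc T i) ->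
  size (PDA T pi) <= runs (map B (iota 1 (size T))).
Proof.
move=> HT hp H2 H3 HB.
have n0 : 0 < size T by case: HT.
set f := fun i => i + LPF T pi i.
set Q := fun k : nat => (k == 1) || (B k != B k.-1).
have key : forall i, 1 <= i <= size T -> f i \in map f (filter (preim pi Q) (iota 1 (size T))).
  elim=> [|k IH] hk; first lia.
  case Qk: (Q (pi k.+1)).
    by apply: map_f; rewrite mem_filter /= Qk mem_iota; lia.
  case: (eqVneq k 0) => [k0|kn0].
    move: Qk; rewrite k0 /Q; case: eqP => //= p1 /negbFE/eqP eB.
    have r1 := perm_range hp (i:=1) ltac:(lia).
    have p2 : 1 <= (pi 1).-1 <= size T by lia.
    have [j hj ej] := perm_surj hp p2.
    have h1 := HB 1 ltac:(lia). have h2 := HB j hj.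
    move: eB; rewrite -ej h1 h2.
    rewrite /prevc eqxx; case: eqP => [j1|jn1].
      by move: ej; rewrite j1; lia.
    move=> e; have := text_dollar HT (i:=j.-1) ltac:(lia); rewrite e ltnn //.
  have -> : f k.+1 = f k.
    move: Qk; rewrite /Q; case: eqP => //= p1 /negbFE/eqP eB.
    have r1 := perm_range hp (i:=k.+1) ltac:(lia).
    have p2 : 1 <= (pi k.+1).-1 <= size T by lia.
    have [j hj ej] := perm_surj hp p2.
    have pe : prevc T k.+1 = prevc T j by rewrite -!HB // ej.
    have hB := claimB HT hp H2 H3 (k:=k) (j:=j) ltac:(lia) ltac:(lia) hj ej (introN eqP p1) pe.
    have hA := claimA HT hp H2 (k:=k) ltac:(lia) ltac:(lia).
    rewrite /f; lia.
  apply: IH; lia.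
rewrite /PDA size_sort.
have sub : {subset undup [seq i + LPF T pi i | i <- iota 1 (size T)] <=
                map f (filter (preim pi Q) (iota 1 (size T)))}.
  move=> x; rewrite mem_undup => /mapP[i]; rewrite mem_iota => hi ->.
  apply: key; lia.
apply: leq_trans (uniq_leq_size (undup_uniq _) sub) _.
rewrite size_map size_filter -count_map runs_count //.
by rewrite (permP hp).
Qed.

Lemma lexle_trans : transitive lexle.
Proof.
move=> t s u; rewrite /lexle => /orP[/eqP->//|st] /orP[/eqP<-|tu]; first by rewrite st orbT.
by rewrite (lexlt_trans st tu) orbT.
Qed.

Lemma lexle_total : total lexle.
Proof.
move=> s t; rewrite /lexle; case: (eqVneq s t) => [->|st] //.
by rewrite /=; apply: lexlt_total.
Qed.

Lemma sorted_index_count (S : seq (seq nat)) x : sorted lexle S -> x \in S ->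
  count (fun y => lexlt y x) S = index x S.
Proof.
move=> so xS; set m := index x S.
have mS : m < size S by rewrite index_mem.
have nx : nth [::] S m = x by rewrite nth_index.
rewrite -(cat_take_drop m S) count_cat (drop_nth [::] mS) /= nx lexlt_irr add0n.
have -> : count (fun y => lexlt y x) (drop m.+1 S) = 0.
  apply/eqP; rewrite -leqn0 leqNgt -has_count; apply/hasPn => y /(nthP [::]) [p hp <-].
  rewrite nth_drop.
  have := sorted_ltn_nth lexle_trans [::] so m (m.+1+p).
  rewrite size_drop in hp.
  have h2 : m.+1 + p < size S by rewrite -ltn_subRL.
  have h3 : m < m.+1 + p by rewrite ltnS leq_addr.
  rewrite nx => /(_ mS h2 h3).
  by rewrite /lexle => /orP[/eqP->|h]; rewrite ?lexlt_irr // lexlt_asym.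
rewrite addn0.
have : all (fun y => lexlt y x) (take m S).
  apply/(all_nthP [::]) => p; rewrite size_take mS => hp; rewrite nth_take //.
  have := sorted_ltn_nth lexle_trans [::] so p m.
  have hp' : p < size S by apply: ltn_trans hp mS.
  rewrite nx => /(_ hp' mS hp).
  have := before_find [::] (a := pred1 x) (s := S) hp => /= ne.
  by rewrite /lexle ne.
by rewrite all_count size_take mS => /eqP.
Qed.

Lemma rot_lt T a b : is_text T -> 1 <= a <= size T -> 1 <= b <= size T ->
  lexlt (rot a.-1 T) (rot b.-1 T) = lexlt (suf T a) (suf T b).
Proof.
move=> HT ha hb; case: (eqVneq a b) => [->|ab]; first by rewrite !lexlt_irr.
by rewrite /rot lexlt_cat -/(suf T a) -/(suf T b); [|apply: suf_lcp_lt|apply: suf_lcp_lt2].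
Qed.

Lemma last_rot T i : is_text T -> 1 <= i <= size T -> last 0 (rot i.-1 T) = prevc T i.
Proof.
move=> HT hi; rewrite /prevc; case: eqP => [->|i1].
  by rewrite rot0 /tchar nth_last.
rewrite -nth_last size_rot /rot nth_cat size_drop.
rewrite ifF; last by apply/negbTE; rewrite -leqNgt; lia.
rewrite nth_take; last lia.
rewrite /tchar; congr nth; lia.
Qed.

Lemma size_BWT T : size (BWT T) = size T.
Proof. by rewrite /BWT size_map size_sort size_map size_iota. Qed.

Lemma BWT_nth T i : is_text T -> 1 <= i <= size T ->
  nth 0 (BWT T) (ISA T i).-1 = prevc T i.
Proof.
move=> HT hi.
set rots := [seq rot k T | k <- iota 0 (size T)].
set S := sort lexle rots.
set x := rot i.-1 T.
have xS : x \in S by rewrite (perm_mem (permEl (perm_sort _ _))); apply: map_f; rewrite mem_iota; lia.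
have so : sorted lexle S by apply: sort_sorted; exact: lexle_total.
have e : (ISA T i).-1 = index x S.
  rewrite -sorted_index_count // (permP (permEl (perm_sort lexle rots))) count_map /ISA /=.
  rewrite (iotaDl 1 0) count_map; apply: eq_in_count => k; rewrite mem_iota => hk /=.
  rewrite -(rot_lt HT (a:=k.+1) (b:=i)) //; lia.
rewrite e /BWT -/rots -/S (nth_map [::]); last by rewrite index_mem.
by rewrite nth_index // last_rot.
Qed.

Theorem lemma17 (T : seq nat) (HT : is_text T) :
  [/\ is_perm_on (size T) (pi_minus T), is_perm_on (size T) (pi_plus T),
      order_preserving T (pi_minus T) & order_preserving T (pi_plus T)] /\
  size (st_lex_minus T) <= bwt_r T /\ size (st_lex_plus T) <= bwt_r T.
Proof.
split; first split.
- exact: perm_minus.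
- exact: perm_plus.
- by move=> i j hi hj lt e _; apply: op_minus.
- by move=> i j hi hj lt e _; apply: op_plus.
have n0 : 0 < size T by case: HT.
split.
- have := PDA_bound (B := fun k => nth 0 (BWT T) k.-1) HT (perm_minus T)
     (fun i j hi hj e lt => op_minus hi hj e lt) (@H3_minus T)
     (fun i hi => BWT_nth HT hi).
  have -> : [seq nth 0 (BWT T) k.-1 | k <- iota 1 (size T)] = BWT T.
    apply: (@eq_from_nth _ 0); first by rewrite size_map size_iota size_BWT.
    move=> k; rewrite size_map size_iota => hk.
    by rewrite (nth_map 0) ?size_iota // nth_iota.
  by [].
- have := PDA_bound (B := fun k => nth 0 (BWT T) (size T - k)) HT (perm_plus T)
     (fun i j hi hj e lt => op_plus hi hj e lt) (@H3_plus T).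
  have HB : forall i, 1 <= i <= size T -> nth 0 (BWT T) (size T - pi_plus T i) = prevc T i.
    move=> i hi; rewrite -(BWT_nth HT hi); congr nth; rewrite /pi_plus.
    have := ISA_range hi; lia.
  move=> /(_ HB).
  have -> : [seq nth 0 (BWT T) (size T - k) | k <- iota 1 (size T)] = rev (BWT T).
    apply: (@eq_from_nth _ 0); first by rewrite size_map size_iota size_rev size_BWT.
    move=> k; rewrite size_map size_iota => hk.
    rewrite (nth_map 0) ?size_iota // nth_iota // nth_rev size_BWT //; congr nth; lia.
  by rewrite runs_rev.
Qed.
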